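(* Let $n\ge 2$, let $T=\{1,\dots,n\}$ and let $\mathcal T$ be a topology on $T$. Fix an integer $k\ge 1$ and let $X_{k-1}$ be the set of points $\alpha\in T\setminus\{n\}$ whose covering set $\alpha^{*}$ is an $m$-system for some $m<k$. Let $P$ be a $k$-system of $\mathcal T$ with $P\setminus\{n\}\subseteq X_{k-1}$. Then either $P$ is a union of $k'$-systems with $k'<k$, or $P=n^{*}$.
   Context: For $\alpha\in T$, $\alpha^{*}$ (the covering set of $\alpha$) denotes the smallest open set of $\mathcal T$ containing $\alpha$. For an integer $m\ge 0$, an $m$-system is an open set $P$ of $\mathcal T$ such that $P\setminus\{n\}$ has exactly $m$ points. *)

(* Defs.v *)
From mathcomp Require Import all_boot.
Set Implicit Arguments. Unset Strict Implicit. Unset Printing Implicit Defensive.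

(* A topology on a finite type T, given by its family of open sets.
   On a finite type, closure under arbitrary unions is equivalent to
   closure under binary unions together with containing set0. *)
Definition is_topology (T : finType) (tau : {set {set T}}) : Prop :=
  [/\ set0 \in tau, [set: T] \in tau,
      (forall U V, U \in tau -> V \in tau -> U :|: V \in tau)
    & (forall U V, U \in tau -> V \in tau -> U :&: V \in tau)].

Definition covset (T : finType) (tau : {set {set T}}) (a : T) : {set T} :=
  \bigcap_(U in tau | a \in U) U.

Definition msys (T : finType) (tau : {set {set T}}) (p : T) (m : nat)
  (P : {set T}) : bool := (P \in tau) && (#|P :\ p| == m).

Definition Xset (T : finType) (tau : {set {set T}}) (p : T) (j : nat) : {set T} :=
  [set a | (a != p) && [exists m : 'I_j.+1, msys tau p m (covset tau a)]].

Lemma predn_lt (n : nat) : 1 < n -> n.-1 < n.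
Proof. by case: n. Qed.

(* the point "n" of T = {1,...,n}, modelled as the ordinal of value n-1 in 'I_n *)
Definition top_pt (n : nat) (hn : 1 < n) : 'I_n := Ordinal (predn_lt hn).

(* Main.v *)
Require Import Defs.
From mathcomp Require Import all_boot.

Lemma covset_open (T : finType) (tau : {set {set T}}) a :
  is_topology tau -> covset tau a \in tau.
Proof.
case=> _ hT _ hI; rewrite /covset.
apply: (big_ind (fun S => S \in tau)); [exact: hT | exact: hI | by move=> i /andP []].
Qed.

Lemma covset_mem (T : finType) (tau : {set {set T}}) a :
  a \in covset tau a.
Proof. by apply/bigcapP => U /andP []. Qed.

Lemma covset_sub (T : finType) (tau : {set {set T}}) a U :
  U \in tau -> a \in U -> covset tau a \subset U.
Proof. by move=> hU haU; apply: (@bigcap_inf _ _ U); rewrite hU haU. Qed.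

Theorem theorem1 (n : nat) (hn : 1 < n) (tau : {set {set 'I_n}})
  (htau : is_topology tau) (k : nat) (hk : 1 <= k) (P : {set 'I_n})
  (hP : msys tau (top_pt hn) k P)
  (hPX : P :\ top_pt hn \subset Xset tau (top_pt hn) k.-1) :
  (exists F : {set {set 'I_n}},
      (forall Q, Q \in F -> exists k', k' < k /\ msys tau (top_pt hn) k' Q)
      /\ P = \bigcup_(Q in F) Q)
  \/ P = covset tau (top_pt hn).
Proof.
set p := top_pt hn in hP hPX *.
move: hP => /andP [hPo /eqP hPk].
have sub a : a \in P -> covset tau a \subset P by move=> ha; exact: covset_sub.
have [pP|pnP] := boolP (p \in P); last first.
  left; exists [set covset tau a | a in P]; split.
    move=> Q /imsetP [a aP ->].
    have : a \in P :\ p by rewrite in_setD1 aP andbT; apply: contraNneq pnP => <-.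
    move/(subsetP hPX); rewrite inE => /andP [_ /existsP [m hm]].
    exists m; split => //; exact: leq_trans (ltn_ord m) (eq_leq (prednK hk)).
  apply/setP => x; apply/idP/idP.
    move=> xP; apply/bigcupP; exists (covset tau x); first exact: imset_f.
    exact: covset_mem.
  by case/bigcupP => Q /imsetP [a aP ->]; apply/subsetP/sub.
have hcp := sub p pP.
have [eq|neq] := eqVneq (covset tau p) P; first by right.
left; exists [set covset tau a | a in P]; split.
  move=> Q /imsetP [a aP ->].
  have [->|anp] := eqVneq a p.
    exists #|covset tau p :\ p|; split; last by rewrite /msys covset_open // eqxx.
    rewrite -hPk ltn_neqAle subset_leq_card ?setSD // andbT.
    apply: contra neq => /eqP hc; rewrite eqEcard hcp /=.
    have : #|covset tau p| = #|covset tau p :\ p|.+1 by rewrite (cardsD1 p) covset_mem.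
    have : #|P| = #|P :\ p|.+1 by rewrite (cardsD1 p) pP.
    by move=> -> ->; rewrite hc.
  have : a \in P :\ p by rewrite in_setD1 aP anp.
  move/(subsetP hPX); rewrite inE => /andP [_ /existsP [m hm]].
  exists m; split => //; exact: leq_trans (ltn_ord m) (eq_leq (prednK hk)).
apply/setP => x; apply/idP/idP.
  move=> xP; apply/bigcupP; exists (covset tau x); first exact: imset_f.
  exact: covset_mem.
by case/bigcupP => Q /imsetP [a aP ->]; apply/subsetP/sub.
Qed.
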